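(* Let $\psi$ be the four-taxon network described in the context, with $w=0$ and $\gamma=1/2$, and one gene copy per taxon. In the limit $x\to\infty$, the limiting probabilities of the gene tree topologies $((a,b),(c,d))$ and $((a,c),(b,d))$ (both equal to $\tfrac14 e^{-y}$) exceed the limiting probabilities of each of the two trees displayed by $\psi$, namely $((a,(b,c)),d)$ and $(a,((b,c),d))$ (both equal to $\tfrac12-\tfrac{5}{12}e^{-y}$), if and only if $y<\ln(4/3)\approx 0.288$. Consequently, for such $y$ (and all sufficiently large $x$) the most likely gene tree topology is not a tree displayed by $\psi$.
   Context: The network $\psi$ on taxa $A,B,C,D$ (gene copies $a,b,c,d$): the root $r$ has two children $p$ and $q$, with edges $(r,p)$ and $(r,q)$ both of length $x$. Node $p$ has children the leaf $A$ and a reticulation node $h$; node $q$ has children the leaf $D$ and $h$. The reticulation edges $(p,h)$ and $(q,h)$ have length $w=0$ and inheritance probabilities $\gamma$ and $1-\gamma$ respectively. Node $h$ has a single child $m$ via an edge of length $y>0$, and $m$ has the two leaf children $B$ and $C$. A tree is displayed by a network if it is obtained by deleting, for each reticulation node, one of its two incoming edges and then suppressing nodes of in-degree 1 and out-degree 1; here the displayed trees are $((A,(B,C)),D)$ and $(A,((B,C),D))$. Multispecies network coalescent: gene lineages are traced backward in time from the leaves; within each branch every pair of lineages present coalesces independently at rate 1 per coalescent unit for the branch's duration; when a lineage reaches a reticulation node it independently enters the incoming edge $b$ with probability equal to its inheritance probability; above the root all remaining lineages coalesce. Probabilities of gene tree topologies are with respect to this process. *)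

(* Defs.v *)
From Stdlib Require Import Reals Lra List Arith.
Import ListNotations.
Open Scope R_scope.

Inductive taxon := ga | gb | gc | gd.

Definition taxon_eqb (s t : taxon) : bool :=
  match s, t with
  | ga, ga | gb, gb | gc, gc | gd, gd => true
  | _, _ => false
  end.

(* rooted binary gene trees (a lineage carries the subtree below it) *)
Inductive gtree := Leaf (t : taxon) | Node (l r : gtree).

Fixpoint teqb (T U : gtree) : bool :=
  match T, U with
  | Leaf s, Leaf t => taxon_eqb s t
  | Node l1 r1, Node l2 r2 =>
      (teqb l1 l2 && teqb r1 r2) || (teqb l1 r2 && teqb r1 l2)
  | _, _ => false
  end.

Definition dist (A : Type) := list (R * A).

Definition bind {A B : Type} (d : dist A) (f : A -> dist B) : dist B :=
  flat_map (fun p => map (fun q => (fst p * fst q, snd q)) (f (snd p))) d.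

Definition rise (a k : nat) : R := fold_right Rmult 1 (map (fun l => INR (a + l)) (seq 0 k)).
Definition fall (a k : nat) : R := fold_right Rmult 1 (map (fun l => INR a - INR l) (seq 0 k)).

(* Tavare's formula: probability that i lineages become exactly j (1 <= j <= i)
   lineages in time t under Kingman's coalescent (pairwise rate 1). *)
Definition g (i j : nat) (t : R) : R :=
  fold_right Rplus 0
    (map (fun k => exp (- (INR k * (INR k - 1) / 2) * t) * (2 * INR k - 1)
                   * (-1) ^ (k - j) * rise j (k - 1) * fall i k
                   / (INR (fact j) * INR (fact (k - j)) * rise i k))
         (seq j (i - j + 1))).

Definition pairs (n : nat) : list (nat * nat) :=
  flat_map (fun j => map (fun i => (i, j)) (seq 0 j)) (seq 0 n).

Fixpoint remove_at {A : Type} (n : nat) (l : list A) : list A :=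
  match n, l with
  | _, [] => []
  | O, _ :: l' => l'
  | S n', x :: l' => x :: remove_at n' l'
  end.

Definition merge_at (i j : nat) (L : list gtree) : list gtree :=
  match L with
  | [] => []
  | x0 :: _ => Node (nth i L x0) (nth j L x0) :: remove_at i (remove_at j L)
  end.

Fixpoint merges (m : nat) (L : list gtree) : dist (list gtree) :=
  match m with
  | O => [(1, L)]
  | S m' =>
      let k := length L in
      flat_map (fun ij =>
        map (fun q => (2 / INR (k * (k - 1)) * fst q, snd q))
            (merges m' (merge_at (fst ij) (snd ij) L)))
        (pairs k)
  end.

Definition branch (t : R) (L : list gtree) : dist (list gtree) :=
  match length L with
  | O => [(1, L)]
  | k => flat_map (fun m => map (fun q => (g k (k - m) t * fst q, snd q)) (merges m L))
                  (seq 0 k)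
  end.

(* above the root: all remaining lineages coalesce *)
Definition root_dist (L : list gtree) : dist gtree :=
  bind (merges (length L - 1) L)
       (fun L' => match L' with [T] => [(1, T)] | _ => [] end).

(* at a reticulation node each lineage independently goes to the first parent
   with probability gam, to the second with probability 1-gam *)
Fixpoint split (gam : R) (L : list gtree) : dist (list gtree * list gtree) :=
  match L with
  | [] => [(1, ([], []))]
  | T :: L' =>
      flat_map (fun p =>
        [(gam * fst p, (T :: fst (snd p), snd (snd p)));
         ((1 - gam) * fst p, (fst (snd p), T :: snd (snd p)))]) (split gam L')
  end.

(** * The network psi and its multispecies network coalescent
    (one gene copy per taxon; leaf edges carry a single lineage so their
    lengths are irrelevant). *)
Definition psi_dist (x y w gam : R) : dist gtree :=
  bind (branch y [Leaf gb; Leaf gc]) (fun L1 =>            (* edge (h,m), length y *)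
  bind (split gam L1) (fun LL =>                           (* reticulation h *)
  bind (branch w (fst LL)) (fun Lp =>                      (* edge (p,h), length w *)
  bind (branch w (snd LL)) (fun Lq =>                      (* edge (q,h), length w *)
  bind (branch x (Leaf ga :: Lp)) (fun Lp' =>              (* edge (r,p), length x *)
  bind (branch x (Leaf gd :: Lq)) (fun Lq' =>              (* edge (r,q), length x *)
  root_dist (Lp' ++ Lq'))))))).

Definition gt_prob (x y w gam : R) (T : gtree) : R :=
  fold_right Rplus 0
    (map (fun p => if teqb (snd p) T then fst p else 0) (psi_dist x y w gam)).

Definition lim_infty (f : R -> R) (l : R) : Prop :=
  forall eps, eps > 0 -> exists M, forall x, x > M -> Rabs (f x - l) < eps.

Definition T_ab_cd := Node (Node (Leaf ga) (Leaf gb)) (Node (Leaf gc) (Leaf gd)).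
Definition T_ac_bd := Node (Node (Leaf ga) (Leaf gc)) (Node (Leaf gb) (Leaf gd)).
Definition D1 := Node (Node (Leaf ga) (Node (Leaf gb) (Leaf gc))) (Leaf gd).
Definition D2 := Node (Leaf ga) (Node (Node (Leaf gb) (Leaf gc)) (Leaf gd)).

(* the trees displayed by psi: ((A,(B,C)),D) (delete (q,h)) and
   (A,((B,C),D)) (delete (p,h)), as gene tree topologies *)
Definition displayed_by_psi (T : gtree) : Prop :=
  teqb T D1 = true \/ teqb T D2 = true.

(* Main.v *)
Require Import Defs.
From Stdlib Require Import Reals.
Open Scope R_scope.
From Stdlib Require Import Lra List Bool.

Ltac gsolve := intros t; unfold g, rise, fall; simpl;
  try replace (- (1 * (1 - 1) / 2) * t) with 0 by field;
  try replace (- ((1 + 1) * (1 + 1 - 1) / 2) * t) with (-t) by field;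
  try replace (- ((1 + 1 + 1) * (1 + 1 + 1 - 1) / 2) * t) with (-t + (-t + -t)) by field;
  rewrite ?exp_plus, ?exp_0; field.
Lemma g11 : forall t, g 1 1 t = 1. Proof. gsolve. Qed.
Lemma g22 : forall t, g 2 2 t = exp (-t). Proof. gsolve. Qed.
Lemma g21 : forall t, g 2 1 t = 1 - exp (-t). Proof. gsolve. Qed.
Lemma g33 : forall t, g 3 3 t = exp (-t)^3. Proof. gsolve. Qed.
Lemma g32 : forall t, g 3 2 t = 3/2 * (exp (-t) - exp (-t)^3). Proof. gsolve. Qed.
Lemma g31 : forall t, g 3 1 t = 1 - 3/2 * exp (-t) + 1/2 * exp(-t)^3. Proof. gsolve. Qed.

Ltac pcomp := intros x y;
  cbv beta iota zeta delta [gt_prob psi_dist root_dist branch bind Defs.split flat_map map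
    fold_right length seq pairs merges merge_at remove_at nth app fst snd teqb taxon_eqb
    Nat.sub INR Nat.mul Nat.add andb orb T_ab_cd T_ac_bd D1 D2];
  rewrite ?g11, ?g22, ?g21, ?g33, ?g32, ?g31, ?Ropp_0, ?exp_0;
  repeat rewrite ?Rplus_0_l, ?Rplus_0_r, ?Rmult_1_r, ?Rmult_1_l, ?Rmult_0_l, ?Rmult_0_r;
  field.

Lemma P_abcd : forall x y, gt_prob x y 0 (1/2) T_ab_cd =
  exp (-y) * (1/4 - 1/4 * exp (-x) + 5/36 * exp (-x)^2 - 1/36 * exp (-x)^3).
Proof. pcomp. Qed.
Lemma P_acbd : forall x y, gt_prob x y 0 (1/2) T_ac_bd =
  exp (-y) * (1/4 - 1/4 * exp (-x) + 5/36 * exp (-x)^2 - 1/36 * exp (-x)^3).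
Proof. pcomp. Qed.
Lemma P_D1 : forall x y, gt_prob x y 0 (1/2) D1 =
  1/2 - 5/12 * exp (-y) - 1/6 * exp (-x) + exp (-y) * (1/8 * exp (-x) + 1/36 * exp (-x)^2 - 1/72 * exp (-x)^3).
Proof. pcomp. Qed.
Lemma P_D2 : forall x y, gt_prob x y 0 (1/2) D2 =
  1/2 - 5/12 * exp (-y) - 1/6 * exp (-x) + exp (-y) * (1/8 * exp (-x) + 1/36 * exp (-x)^2 - 1/72 * exp (-x)^3).
Proof. pcomp. Qed.

Lemma lim_poly : forall (f : R -> R) L c1 c2 c3,
  (forall x, f x = L + c1 * exp (-x) + c2 * exp (-x)^2 + c3 * exp (-x)^3) ->
  lim_infty f L.
Proof.
  intros f L c1 c2 c3 Hf eps Heps.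
  set (K := Rabs c1 + Rabs c2 + Rabs c3 + 1).
  assert (HK : 0 < K) by (unfold K; pose proof (Rabs_pos c1); pose proof (Rabs_pos c2);
    pose proof (Rabs_pos c3); lra).
  set (d := Rmin 1 (eps / K)).
  assert (Hd : 0 < d) by (unfold d; apply Rmin_pos; [lra | apply Rdiv_lt_0_compat; lra]).
  exists (- ln d). intros x Hx.
  set (E := exp (-x)).
  assert (HE0 : 0 < E) by apply exp_pos.
  assert (HEd : E < d).
  { unfold E. rewrite <- (exp_ln d Hd). apply exp_increasing. lra. }
  assert (Hd1 : d <= 1) by apply Rmin_l.
  assert (Hd2 : d <= eps / K) by apply Rmin_r.
  assert (HE2 : 0 <= E^2 <= E) by (split; nra).
  assert (HE3 : 0 <= E^3 <= E) by (split; nra).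
  rewrite Hf. fold E.
  replace (L + c1 * E + c2 * E ^ 2 + c3 * E ^ 3 - L) with (c1 * E + c2 * E ^ 2 + c3 * E ^ 3) by ring.
  eapply Rle_lt_trans.
  { eapply Rle_trans. apply Rabs_triang. apply Rplus_le_compat_r. apply Rabs_triang. }
  rewrite !Rabs_mult, (Rabs_pos_eq E), (Rabs_pos_eq (E^2)), (Rabs_pos_eq (E^3)) by lra.
  assert (E * K < eps).
  { apply Rlt_le_trans with (d * K). apply Rmult_lt_compat_r; lra.
    apply Rle_trans with (eps / K * K). apply Rmult_le_compat_r; lra.
    right; field; lra. }
  pose proof (Rabs_pos c1); pose proof (Rabs_pos c2); pose proof (Rabs_pos c3).
  unfold K in *. nra.
Qed.

Lemma taxon_eqb_trans : forall a b c, taxon_eqb a b = true -> taxon_eqb b c = true -> taxon_eqb a c = true.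
Proof. destruct a, b, c; simpl; congruence. Qed.

Lemma teqb_trans : forall T U V, teqb T U = true -> teqb U V = true -> teqb T V = true.
Proof.
  induction T as [s | l1 IHl r1 IHr]; intros U V H1 H2.
  - destruct U; destruct V; simpl in *; try discriminate. eapply taxon_eqb_trans; eauto.
  - destruct U as [|l2 r2]; [discriminate|]. destruct V as [|l3 r3]; [discriminate|].
    simpl in *.
    apply orb_true_iff in H1; apply orb_true_iff in H2.
    apply orb_true_iff.
    destruct H1 as [H1|H1]; apply andb_true_iff in H1; destruct H1 as [A1 B1];
    destruct H2 as [H2|H2]; apply andb_true_iff in H2; destruct H2 as [A2 B2].
    + left; apply andb_true_iff; split; eauto.
    + right; apply andb_true_iff; split; eauto.
    + right; apply andb_true_iff; split; eauto.
    + left; apply andb_true_iff; split; eauto.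
Qed.

Lemma taxon_eqb_sym : forall a b, taxon_eqb a b = taxon_eqb b a.
Proof. destruct a, b; reflexivity. Qed.

Lemma teqb_sym : forall T U, teqb T U = teqb U T.
Proof.
  induction T as [s | l1 IHl r1 IHr]; intros U; destruct U as [t|l2 r2]; simpl; auto.
  - apply taxon_eqb_sym.
  - rewrite (IHl l2), (IHr r2), (IHl r2), (IHr l2).
    destruct (teqb l2 l1), (teqb r2 r1), (teqb r2 l1), (teqb l2 r1); reflexivity.
Qed.

Lemma gt_prob_teqb : forall x y w gam T U, teqb T U = true ->
  gt_prob x y w gam T = gt_prob x y w gam U.
Proof.
  intros x y w gam T U H. unfold gt_prob. f_equal. apply map_ext. intros p.
  assert (teqb (snd p) T = teqb (snd p) U) as ->; [|reflexivity].
  destruct (teqb (snd p) T) eqn:E1.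
  - symmetry. eapply teqb_trans; eauto.
  - destruct (teqb (snd p) U) eqn:E2; auto.
    rewrite <- E1. eapply teqb_trans; eauto. rewrite teqb_sym; auto.
Qed.

Theorem mainTheorem3 : forall y : R, 0 < y ->
  let P := fun T x => gt_prob x y 0 (1/2) T in
  lim_infty (P T_ab_cd) (/4 * exp (- y)) /\
  lim_infty (P T_ac_bd) (/4 * exp (- y)) /\
  lim_infty (P D1) (1/2 - 5/12 * exp (- y)) /\
  lim_infty (P D2) (1/2 - 5/12 * exp (- y)) /\
  ((/4 * exp (- y) > 1/2 - 5/12 * exp (- y)) <-> y < ln (4/3)) /\
  (y < ln (4/3) ->
     exists M, forall x, x > M ->
       forall D, displayed_by_psi D -> exists T, P T x > P D x).
Proof.
  intros y Hy P.
  assert (L1 : lim_infty (P T_ab_cd) (/4 * exp (- y))).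
  { apply lim_poly with (c1 := -1/4 * exp (-y)) (c2 := 5/36 * exp (-y)) (c3 := -1/36 * exp (-y)).
    intros x; unfold P; rewrite P_abcd; field. }
  assert (L2 : lim_infty (P T_ac_bd) (/4 * exp (- y))).
  { apply lim_poly with (c1 := -1/4 * exp (-y)) (c2 := 5/36 * exp (-y)) (c3 := -1/36 * exp (-y)).
    intros x; unfold P; rewrite P_acbd; field. }
  assert (L3 : lim_infty (P D1) (1/2 - 5/12 * exp (- y))).
  { apply lim_poly with (c1 := -1/6 + 1/8 * exp (-y)) (c2 := 1/36 * exp (-y)) (c3 := -1/72 * exp (-y)).
    intros x; unfold P; rewrite P_D1; field. }
  assert (L4 : lim_infty (P D2) (1/2 - 5/12 * exp (- y))).
  { apply lim_poly with (c1 := -1/6 + 1/8 * exp (-y)) (c2 := 1/36 * exp (-y)) (c3 := -1/72 * exp (-y)).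
    intros x; unfold P; rewrite P_D2; field. }
  assert (Hln : ln (4/3) = - ln (3/4)).
  { replace (4/3) with (/ (3/4)) by field. apply ln_Rinv. lra. }
  assert (IFF : (/4 * exp (- y) > 1/2 - 5/12 * exp (- y)) <-> y < ln (4/3)).
  { rewrite Hln. split; intros H.
    - assert (3/4 < exp (-y)) by lra.
      assert (ln (3/4) < ln (exp (-y))) by (apply ln_increasing; lra).
      rewrite ln_exp in H1. lra.
    - assert (exp (ln (3/4)) < exp (-y)) by (apply exp_increasing; lra).
      rewrite exp_ln in H0 by lra. lra. }
  split; [exact L1|]. split; [exact L2|]. split; [exact L3|]. split; [exact L4|].
  split; [exact IFF|].
  intros Hlt. apply IFF in Hlt.
  set (delta := /4 * exp (- y) - (1/2 - 5/12 * exp (- y))).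
  assert (Hdelta : delta / 2 > 0) by (unfold delta; lra).
  destruct (L1 _ Hdelta) as [M1 HM1].
  destruct (L3 _ Hdelta) as [M3 HM3].
  exists (Rmax M1 M3). intros x Hx D HD.
  exists T_ab_cd.
  assert (HPD : P D x = P D1 x).
  { unfold P. destruct HD as [HD|HD].
    - apply gt_prob_teqb; auto.
    - rewrite (gt_prob_teqb _ _ _ _ _ _ HD). unfold P.
      rewrite P_D1, P_D2; reflexivity. }
  rewrite HPD.
  assert (x > M1) by (pose proof (Rmax_l M1 M3); lra).
  assert (x > M3) by (pose proof (Rmax_r M1 M3); lra).
  specialize (HM1 x H). specialize (HM3 x H0).
  apply Rabs_def2 in HM1. apply Rabs_def2 in HM3.
  unfold delta in *. lra.
Qed.
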